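(* Let $F$ be an algebraically closed field, $l>1$ an integer coprime to the characteristic of $F$, $\xi\in F$ a primitive $l$-th root of $1$, and $I$ an infinite ordered set. Let $$Clg(l,I)=\langle x_i,\ i\in I \mid x_i^l=1;\ x_i^{-1}x_jx_i=\xi x_j \text{ for } i<j;\ x_i^{-1}x_jx_i=\xi^{-1}x_j \text{ for } i>j;\ i,j\in I\rangle.$$ Then $Clg(l,I)$ is a unital locally matrix algebra with Steinitz number $\mathbf{n}(Clg(l,I))=l^{\infty}$.
   Context: A unital algebra $A$ is locally matrix if every finite subset lies in a subalgebra $B$ with $1_A\in B$ and $B\cong M_n(F)$ for some $n$. $D(A)$ is the set of $n$ for which $A$ has a subalgebra containing $1_A$ isomorphic to $M_n(F)$, and $\mathbf{n}(A)$ is the least common multiple of $D(A)$ in the lattice of Steinitz numbers $\prod_p p^{r_p}$ ($r_p\in\mathbb{N}\cup\{0,\infty\}$, ordered by divisibility). $l^\infty$ denotes the Steinitz number with exponent $\infty$ at each prime dividing $l$ and $0$ at all other primes. *)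

(* Defs.v *)
From HB Require Import structures.
From mathcomp Require Import all_boot all_order all_algebra.
Set Implicit Arguments. Unset Strict Implicit. Unset Printing Implicit Defensive.
Import Order.TTheory GRing.Theory Num.Theory.
Local Open Scope ring_scope.

Definition infinite_type (T : eqType) : Prop :=
  forall s : seq T, exists t : T, t \notin s.

Definition is_alg_hom (F : fieldType) (A B : algType F) (g : A -> B) : Prop :=
  [/\ forall a b, g (a + b) = g a + g b,
      forall (c : F) a, g (c *: a) = c *: g a,
      forall a b, g (a * b) = g a * g b &
      g 1 = 1].

(* The defining relations of Clg(l, I), with x_i^{-1} = x_i^(l-1). *)
Definition clg_rel (F : fieldType) (l : nat) (xi : F) (d : Order.disp_t)
  (I : orderType d) (B : algType F) (y : I -> B) : Prop :=
  [/\ forall i, y i ^+ l = 1,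
      forall i j, (i < j)%O -> y i ^+ l.-1 * y j * y i = xi *: y j &
      forall i j, (j < i)%O -> y i ^+ l.-1 * y j * y i = xi^-1 *: y j].

(* (A, x) is the algebra presented by generators x_i and the relations above:
   universal property of the presentation. *)
Definition is_Clg (F : fieldType) (l : nat) (xi : F) (d : Order.disp_t)
  (I : orderType d) (A : algType F) (x : I -> A) : Prop :=
  clg_rel l xi x /\
  forall (B : algType F) (y : I -> B), clg_rel l xi y ->
    (exists g : A -> B, is_alg_hom g /\ forall i, g (x i) = y i) /\
    (forall g1 g2 : A -> B, is_alg_hom g1 -> is_alg_hom g2 ->
       (forall i, g1 (x i) = y i) -> (forall i, g2 (x i) = y i) ->
       forall a, g1 a = g2 a).

(* f embeds M_(k+1)(F) unitally into A; its image is a subalgebra containing 1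
   isomorphic to M_(k+1)(F).  (Sizes are written k.+1 so that 'M_(k.+1) carries
   its canonical F-algebra structure; M_0 = 0 is excluded as in the paper.) *)
Definition matrix_embedding (F : fieldType) (A : algType F) (k : nat)
  (f : 'M[F]_k.+1 -> A) : Prop := is_alg_hom f /\ injective f.

Definition D_set (F : fieldType) (A : algType F) (n : nat) : Prop :=
  exists k : nat, n = k.+1 /\ exists f : 'M[F]_k.+1 -> A, matrix_embedding f.

Definition locally_matrix (F : fieldType) (A : algType F) : Prop :=
  forall s : seq A, exists k : nat,
    exists f : 'M[F]_k.+1 -> A, matrix_embedding f /\
      forall a, a \in s -> exists m, f m = a.

(* Steinitz numbers: prime p |-> exponent r_p, None = infinity.
   (Values at non-primes are irrelevant.) *)
Definition steinitz := nat -> option nat.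

Definition le_exp (a b : option nat) : Prop :=
  match a, b with
  | _, None => True
  | None, Some _ => False
  | Some m, Some n => (m <= n)%N
  end.

Definition steinitz_dvd (s t : steinitz) : Prop :=
  forall p, prime p -> le_exp (s p) (t p).

Definition steinitz_of_nat (n : nat) : steinitz := fun p => Some (logn p n).

Definition steinitz_inf (l : nat) : steinitz :=
  fun p => if (p %| l)%N then None else Some 0%N.

Definition is_steinitz_lcm (S : nat -> Prop) (s : steinitz) : Prop :=
  (forall n, S n -> steinitz_dvd (steinitz_of_nat n) s) /\
  (forall t, (forall n, S n -> steinitz_dvd (steinitz_of_nat n) t) ->
     steinitz_dvd s t).

(* Main.v *)
Require Import Defs.
From HB Require Import structures.
From mathcomp Require Import all_boot all_order all_algebra.
From mathcomp Require Import zify.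
From Stdlib Require Import ClassicalEpsilon.
Import Order.TTheory GRing.Theory Num.Theory.
Local Open Scope ring_scope.
Set Implicit Arguments. Unset Strict Implicit. Unset Printing Implicit Defensive.

Section Comm.
Variables (F : fieldType) (A : algType F).
Implicit Types (a b c : A) (q : F).

Lemma commX a b q n : b * a = q *: (a * b) -> b ^+ n * a = q ^+ n *: (a * b ^+ n).
Proof.
move=> h; elim: n => [|n IH]; first by rewrite !expr0 scale1r mulr1 mul1r.
rewrite exprS -mulrA IH -scalerAr (mulrA b a) h -scalerAl scalerA -mulrA.
by rewrite exprSr mulrC.
Qed.

Lemma commXX a b q n m : b * a = q *: (a * b) ->
  b ^+ n * a ^+ m = q ^+ (n * m) *: (a ^+ m * b ^+ n).
Proof.
move=> h; elim: m => [|m IH]; first by rewrite !expr0 muln0 expr0 scale1r mulr1 mul1r.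
rewrite [a ^+ m.+1]exprS (mulrA (b ^+ n)) (commX n h) -scalerAl. rewrite -[a * b ^+ n * _]mulrA IH.
by rewrite -scalerAr scalerA mulrA -exprS -exprD mulnS addnC.
Qed.

Lemma powprod a b q n : b * a = q *: (a * b) ->
  exists e, (a * b) ^+ n = q ^+ e *: (a ^+ n * b ^+ n).
Proof.
move=> h; elim: n => [|n [e IH]]; first by exists 0%N; rewrite !expr0 scale1r mulr1.
exists (e + n)%N; rewrite exprSr IH -scalerAl -mulrA (mulrA (b ^+ n)) (commX n h).
rewrite -scalerAl -scalerAr scalerA -exprD -[a * b ^+ n * b]mulrA -exprSr mulrA.
by rewrite -exprSr.
Qed.

Definition commA a b := a * b = b * a.

Lemma commA_mul a b c : commA c a -> commA c b -> commA c (a * b).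
Proof. by rewrite /commA => h1 h2; rewrite mulrA h1 -mulrA h2 mulrA. Qed.
Lemma commA_add a b c : commA c a -> commA c b -> commA c (a + b).
Proof. by rewrite /commA => h1 h2; rewrite mulrDr mulrDl h1 h2. Qed.
Lemma commA_scale a c k : commA c a -> commA c (k *: a).
Proof. by rewrite /commA => h1; rewrite -scalerAr -scalerAl h1. Qed.
Lemma commA_1 c : commA c 1.
Proof. by rewrite /commA mulr1 mul1r. Qed.
Lemma commA_0 c : commA c 0.
Proof. by rewrite /commA mulr0 mul0r. Qed.
Lemma commA_X c a n : commA c a -> commA c (a ^+ n).
Proof. move=> h; elim: n => [|n IH]; first by rewrite expr0; apply: commA_1.
by rewrite exprS; apply: commA_mul. Qed.
Lemma commA_sum (T : finType) (P : pred T) (G : T -> A) c :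
  (forall t, commA c (G t)) -> commA c (\sum_(t | P t) G t).
Proof. move=> h; apply: (big_ind (commA c)); [exact: commA_0 | move=> x1 x2 h1 h2; apply: commA_add h1 h2 | by move=> t _]. Qed.
Lemma commA_sym a b : commA a b -> commA b a.
Proof. by rewrite /commA. Qed.

End Comm.


Section Units.
Variables (F : fieldType) (A : algType F).

Definition mxunits (T : finType) (E : T -> T -> A) :=
  (forall a b c d, E a b * E c d = if b == c then E a d else 0) /\
  \sum_t E t t = 1.

Definition inspan (T : finType) (E : T -> T -> A) (y : A) :=
  exists M : T -> T -> F, y = \sum_a \sum_b M a b *: E a b.

Variables (T : finType) (E : T -> T -> A).

Lemma span0 : inspan E 0.
Proof. by exists (fun _ _ => 0); rewrite big1 // => a _; rewrite big1 // => b _; rewrite scale0r. Qed.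

Lemma spanD y z : inspan E y -> inspan E z -> inspan E (y + z).
Proof.
move=> [M ->] [N ->]; exists (fun a b => M a b + N a b).
rewrite -big_split /=; apply: eq_bigr => a _; rewrite -big_split /=.
by apply: eq_bigr => b _; rewrite scalerDl.
Qed.

Lemma spanZ k y : inspan E y -> inspan E (k *: y).
Proof.
move=> [M ->]; exists (fun a b => k * M a b).
rewrite scaler_sumr; apply: eq_bigr => a _; rewrite scaler_sumr.
by apply: eq_bigr => b _; rewrite scalerA.
Qed.

Lemma span_sum (I : finType) (P : pred I) (G : I -> A) :
  (forall i, inspan E (G i)) -> inspan E (\sum_(i | P i) G i).
Proof.
move=> h; apply: (big_ind (inspan E)); [exact: span0 | | by move=> i _].
by move=> y z; apply: spanD.
Qed.

Lemma span_unit a b : inspan E (E a b).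
Proof.
exists (fun i j => if (i == a) && (j == b) then 1 else 0).
rewrite (bigD1 a) //= (bigD1 b) //= !eqxx /= scale1r.
rewrite big1 => [|j /negPf ->]; last by rewrite scale0r.
rewrite addr0 big1 ?addr0 // => i /negPf ->; rewrite big1 // => j _; by rewrite scale0r.
Qed.

Hypothesis hE : mxunits E.

Lemma spanM y z : inspan E y -> inspan E z -> inspan E (y * z).
Proof.
move=> [M ->] [N ->]; rewrite mulr_suml; apply: span_sum => a.
rewrite mulr_suml; apply: span_sum => b; rewrite mulr_sumr; apply: span_sum => c.
rewrite mulr_sumr; apply: span_sum => d.
rewrite -scalerAl -scalerAr; apply: spanZ; apply: spanZ.
rewrite hE.1; case: ifP => _; [exact: span_unit | exact: span0].
Qed.

Lemma span1 : inspan E 1.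
Proof. by rewrite -hE.2; apply: span_sum => t; apply: span_unit. Qed.

End Units.


Section Embed.
Variables (F : fieldType) (A : algType F).

Section Ord.
Variables (k : nat) (G : 'I_k.+1 -> 'I_k.+1 -> A).
Hypothesis hG : mxunits G.

Definition fG (M : 'M[F]_k.+1) : A := \sum_i \sum_j M i j *: G i j.

Lemma fG_right M c b : fG M * G c b = \sum_i M i c *: G i b.
Proof.
rewrite /fG mulr_suml; apply: eq_bigr => i _; rewrite mulr_suml (bigD1 c) //= big1.
  by rewrite addr0 -scalerAl hG.1 eqxx.
by move=> j /negPf hj; rewrite -scalerAl hG.1 hj scaler0.
Qed.

Lemma fG_left M c a : G a c * fG M = \sum_j M c j *: G a j.
Proof.
rewrite /fG mulr_sumr (bigD1 c) //= [X in _ + X]big1 ?addr0.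
  by rewrite mulr_sumr; apply: eq_bigr => j _; rewrite -scalerAr hG.1 eqxx.
move=> i /negPf hi; rewrite mulr_sumr big1 // => j _.
by rewrite -scalerAr hG.1 eq_sym hi scaler0.
Qed.

Lemma fG_add M N : fG (M + N) = fG M + fG N.
Proof.
rewrite /fG -big_split; apply: eq_bigr => i _; rewrite -big_split.
by apply: eq_bigr => j _; rewrite mxE scalerDl.
Qed.

Lemma fG_scale c M : fG (c *: M) = c *: fG M.
Proof.
rewrite /fG scaler_sumr; apply: eq_bigr => i _; rewrite scaler_sumr.
by apply: eq_bigr => j _; rewrite mxE scalerA.
Qed.

Lemma fG_mul M N : fG (M * N) = fG M * fG N.
Proof.
transitivity (\sum_c \sum_d \sum_i (M i c * N c d) *: G i d).
  rewrite /fG.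
  under eq_bigr => i _ do under eq_bigr => d _ do rewrite -mulmxE mxE scaler_suml.
  rewrite exchange_big /=.
  under eq_bigr => d _ do rewrite exchange_big /=.
  by rewrite exchange_big.
rewrite [fG N]/fG mulr_sumr; apply: eq_bigr => c _.
rewrite mulr_sumr; apply: eq_bigr => d _.
rewrite -scalerAr fG_right scaler_sumr; apply: eq_bigr => i _.
by rewrite scalerA mulrC.
Qed.

Lemma fG_1 : fG 1 = 1.
Proof.
rewrite /fG -hG.2; apply: eq_bigr => i _; rewrite (bigD1 i) //= big1.
  by rewrite mxE eqxx scale1r addr0.
by move=> j hj; rewrite mxE eq_sym (negPf hj) scale0r.
Qed.

Lemma G_neq0 a b : G a b != 0.
Proof.
apply/eqP => h0.
have haa : G a a = 0 by have := hG.1 a b b a; rewrite eqxx h0 mul0r.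
have : (1 : A) = 0.
  rewrite -hG.2 big1 // => c _.
  have hca : G c a = 0 by have := hG.1 c a a a; rewrite eqxx haa mulr0.
  by have := hG.1 c a a c; rewrite eqxx hca mul0r.
by move/eqP; rewrite oner_eq0.
Qed.

Lemma fG_coef M a b : G a a * fG M * G b b = M a b *: G a b.
Proof.
rewrite fG_left mulr_suml (bigD1 b) //= big1 ?addr0.
  by rewrite -scalerAl hG.1 eqxx.
by move=> j /negPf hj; rewrite -scalerAl hG.1 hj scaler0.
Qed.

Lemma fG_inj : injective fG.
Proof.
move=> M N h; apply/matrixP => a b.
have := fG_coef M a b; rewrite h fG_coef => /eqP.
rewrite -subr_eq0 -scalerBl scaler_eq0 (negPf (G_neq0 a b)) orbF subr_eq0.
by move/eqP.
Qed.

Lemma fG_emb : matrix_embedding fG.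
Proof.
split; last exact: fG_inj.
split; [exact: fG_add | exact: fG_scale | exact: fG_mul | exact: fG_1].
Qed.

Lemma fG_span y : inspan G y -> exists M, fG M = y.
Proof. by move=> [M ->]; exists (\matrix_(i, j) M i j); apply: eq_bigr => i _; apply: eq_bigr => j _; rewrite mxE. Qed.

End Ord.

Lemma units_transport (T U : finType) (h : U -> T) (E : T -> T -> A) :
  bijective h -> mxunits E -> mxunits (fun i j => E (h i) (h j)).
Proof.
move=> hb [h1 h2]; split.
  by move=> a b c d /=; rewrite h1 (inj_eq (bij_inj hb)).
by rewrite -h2 (reindex h (onW_bij _ hb)).
Qed.

Lemma span_transport (T U : finType) (h : U -> T) (E : T -> T -> A) y :
  bijective h -> inspan E y -> inspan (fun i j => E (h i) (h j)) y.
Proof.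
move=> hb [M ->]; exists (fun i j => M (h i) (h j)).
rewrite (reindex h (onW_bij _ hb)); apply: eq_bigr => i _.
by rewrite (reindex h (onW_bij _ hb)).
Qed.

Lemma units_embed (T : finType) (E : T -> T -> A) : mxunits E ->
  exists k, #|T| = k.+1 /\ exists f : 'M[F]_k.+1 -> A, matrix_embedding f /\
    forall y, inspan E y -> exists M, f M = y.
Proof.
move=> hE.
have hT : (0 < #|T|)%N.
  rewrite lt0n; apply/negP => /eqP /card0_eq h0.
  have := hE.2; rewrite big_pred0 // => /eqP; rewrite eq_sym oner_eq0.
  done.
set k := #|T|.-1; have ek : #|T| = k.+1 by rewrite /k prednK.
exists k; split=> //.
pose h (i : 'I_k.+1) : T := enum_val (cast_ord (esym ek) i).
have hb : bijective h.
  exists (fun t => cast_ord ek (enum_rank t)) => i; rewrite /h.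
    by rewrite enum_valK cast_ordKV.
  by rewrite cast_ordK enum_rankK.
have hG := units_transport hb hE.
exists (fG (fun i j => E (h i) (h j))); split; first exact: fG_emb.
by move=> y hy; apply: fG_span; apply: span_transport.
Qed.

End Embed.


Lemma geo_sum (F : fieldType) (l : nat) (y : F) :
  y ^+ l = 1 -> y != 1 -> \sum_(k < l) y ^+ k = 0.
Proof.
move=> h1 h2; have := subrX1 y l; rewrite h1 subrr => /esym /eqP.
by rewrite mulf_eq0 subr_eq0 (negPf h2) /= => /eqP.
Qed.

Lemma dvd_shift (l b c : nat) : (b < l)%N -> (c < l)%N -> (l %| l - b + c)%N = (b == c).
Proof.
move=> hb hc; case: eqP => [->|hne]; first by rewrite subnK ?dvdnn // ltnW.
apply/negP => /dvdnP [q hq].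
case: q hq => [|[|q]] hq; lia.
Qed.

Lemma mod_aux (l k a : nat) : (0 < l)%N -> (a <= l)%N ->
  (k * (l - a) %% l = k * (l - 1) * a %% l)%N.
Proof.
move=> hl ha; apply/eqP; rewrite -(eqn_modDr (k * a)).
have -> : (k * (l - a) + k * a = k * l)%N by rewrite -mulnDr subnK.
have -> : (k * (l - 1) * a + k * a = (k * a) * l)%N.
  by rewrite -mulnA -mulnDr -{2}(mul1n a) -mulnDl subnK // mulnA mulnAC.
by rewrite !modnMl.
Qed.

Section Base.
Variables (F : fieldType) (A : algType F) (l : nat) (xi : F).
Hypotheses (hl0 : (0 < l)%N) (hlF : (l%:R : F) != 0) (hxi : l.-primitive_root xi).
Variables (u v : A).
Hypotheses (hu : u ^+ l = 1) (hv : v ^+ l = 1) (hvu : v * u = xi *: (u * v)).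

Definition Pr : A := (l%:R)^-1 *: \sum_(k < l) v ^+ k.
Definition Eb (a b : 'I_l) : A := u ^+ a * Pr * u ^+ (l - b).

Lemma xil : xi ^+ l = 1. Proof. exact: UnityRootTheory.prim_expr_order. Qed.

Lemma vP : v * Pr = Pr.
Proof.
rewrite /Pr -scalerAr mulr_sumr; congr (_ *: _).
have h1 : \sum_(i < l.+1) v ^+ i = 1 + \sum_(i < l) v ^+ i.+1.
  by rewrite big_ord_recl expr0.
have h2 : \sum_(i < l.+1) v ^+ i = \sum_(i < l) v ^+ i + 1.
  by rewrite big_ord_recr /= hv.
under eq_bigr => k _ do rewrite -exprS.
by apply: (addrI 1); rewrite -h1 h2 addrC.
Qed.

Lemma vkP k : v ^+ k * Pr = Pr.
Proof. elim: k => [|k IH]; first by rewrite expr0 mul1r. by rewrite exprSr -mulrA vP. Qed.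

Lemma PuP j : Pr * u ^+ j * Pr = if (l %| j)%N then Pr else 0.
Proof.
have e1 : Pr * u ^+ j * Pr = ((l%:R)^-1 * \sum_(k < l) (xi ^+ j) ^+ k) *: (u ^+ j * Pr).
  rewrite {1}/Pr -scalerAl -scalerAl mulr_suml mulr_suml -scalerA scaler_suml.
  congr (_ *: _); apply: eq_bigr => k _.
  by rewrite (commXX k j hvu) -scalerAl -mulrA vkP -exprM mulnC exprM.
rewrite e1; case: ifP => hj.
  have -> : xi ^+ j = 1 by apply/eqP; rewrite -(prim_order_dvd hxi).
  under eq_bigr => k _ do rewrite expr1n.
  rewrite sumr_const card_ord mulVf // scale1r.
  by case/dvdnP: hj => q ->; rewrite mulnC exprM hu expr1n mul1r.
rewrite geo_sum ?mulr0 ?scale0r //.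
  by rewrite -exprM mulnC exprM xil expr1n.
by rewrite -(prim_order_dvd hxi) hj.
Qed.

Lemma Eb_mul a b c d : Eb a b * Eb c d = if b == c then Eb a d else 0.
Proof.
have -> : Eb a b * Eb c d = u ^+ a * (Pr * u ^+ (l - b + c) * Pr) * u ^+ (l - d).
  by rewrite /Eb exprD !mulrA.
rewrite PuP dvd_shift //.
case: (b =P c) => [<-|hbc]; first by rewrite !eqxx.
have hbc' : (val b == val c) = false by apply/eqP => h; apply: hbc; apply: val_inj.
by rewrite hbc' mulr0 mul0r.
Qed.

Lemma coprime_l1 : coprime l (l - 1).
Proof. by case: l hl0 => // n _; rewrite subn1 /= coprimeSn. Qed.

Lemma Eb_sum : \sum_a Eb a a = 1.
Proof.
have e1 : forall a : 'I_l, Eb a a = (l%:R)^-1 *: \sum_(k < l) xi ^+ (k * (l - a)) *: v ^+ k.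
  move=> a; rewrite /Eb /Pr -scalerAr -scalerAl; congr (_ *: _).
  rewrite mulr_sumr mulr_suml; apply: eq_bigr => k _.
  rewrite -mulrA (commXX k (l - a) hvu) -scalerAr mulrA -exprD subnKC ?hu ?mul1r //.
  exact: ltnW.
under eq_bigr => a _ do rewrite e1.
rewrite -scaler_sumr exchange_big /=.
under eq_bigr => k _ do rewrite -scaler_suml.
rewrite (bigD1 (Ordinal hl0)) //= [X in _ + X]big1 ?addr0.
  rewrite expr0; under eq_bigr => a _ do rewrite mul0n expr0.
  by rewrite sumr_const card_ord scalerA mulVf // scale1r.
move=> k hk.
have hk0 : (0 < k)%N by rewrite lt0n; apply: contra hk => /eqP hk0; apply/eqP/val_inj.
set z := xi ^+ (k * (l - 1)).
have ez : forall a : 'I_l, xi ^+ (k * (l - a)) = z ^+ a.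
  move=> a; rewrite /z -exprM -(expr_mod _ xil) -[in RHS](expr_mod _ xil); congr (_ ^+ _).
  exact: mod_aux hl0 (ltnW (ltn_ord a)).
under eq_bigr => a _ do rewrite ez.
rewrite geo_sum ?scale0r //.
  by rewrite -exprM mulnC exprM xil expr1n.
by rewrite /z -(prim_order_dvd hxi) Gauss_dvdl ?coprime_l1 // gtnNdvd.
Qed.

Lemma Eb_units : mxunits Eb.
Proof. by split; [exact: Eb_mul | exact: Eb_sum]. Qed.

Lemma u_span : inspan Eb u.
Proof.
rewrite -[u]mulr1 -Eb_sum mulr_sumr; apply: span_sum => a.
case: (ltnP a.+1 l) => ha.
  have -> : u * Eb a a = Eb (Ordinal ha) a by rewrite /Eb !mulrA -exprS.
  exact: span_unit.
have ea : a.+1 = l by apply/eqP; rewrite eqn_leq ha ltn_ord.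
have -> : u * Eb a a = Eb (Ordinal hl0) a by rewrite /Eb !mulrA -exprS ea hu expr0.
exact: span_unit.
Qed.

Lemma v_span : inspan Eb v.
Proof.
rewrite -[v]mulr1 -Eb_sum mulr_sumr; apply: span_sum => a.
have -> : v * Eb a a = xi ^+ a *: Eb a a.
  rewrite /Eb !mulrA -[v]expr1 (commXX 1 a hvu) mul1n -!scalerAl.
  by rewrite expr1 -(mulrA (u ^+ a) v) vP.
by apply: spanZ; apply: span_unit.
Qed.

Lemma Eb_comm c : commA c u -> commA c v -> forall a b, commA c (Eb a b).
Proof.
move=> hcu hcv a b; rewrite /Eb; apply: commA_mul; last exact: commA_X.
apply: commA_mul; first exact: commA_X.
by apply: commA_scale; apply: commA_sum => k; apply: commA_X.
Qed.

End Base.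


Section QC.
Variables (F : fieldType) (A : algType F).
Definition qc (a b : A) (q : F) := b * a = q *: (a * b).
Lemma qc_mulr a b c q r : qc a b q -> qc a c r -> qc a (b * c) (q * r).
Proof.
rewrite /qc => h1 h2; rewrite -(mulrA b c a) h2 -scalerAr (mulrA b a c) h1 -scalerAl scalerA.
by rewrite -mulrA mulrC.
Qed.
Lemma qc_mull a b c q r : qc a b q -> qc c b r -> qc (a * c) b (q * r).
Proof.
rewrite /qc => h1 h2; rewrite (mulrA b a c) h1 -scalerAl -(mulrA a b c) h2 -scalerAr scalerA.
by rewrite mulrA.
Qed.
Lemma qc_refl a : qc a a 1. Proof. by rewrite /qc scale1r. Qed.
Lemma qc_Xr a b q n : qc a b q -> qc a (b ^+ n) (q ^+ n).
Proof. by move=> h; rewrite /qc -[a in LHS]expr1 (commXX n 1 h) muln1 expr1. Qed.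
Lemma qc_Xl a b q n : qc a b q -> qc (a ^+ n) b (q ^+ n).
Proof. by move=> h; rewrite /qc -[b in LHS]expr1 (commXX 1 n h) mul1n expr1. Qed.
Lemma qc_Zl a b q k : qc a b q -> qc (k *: a) b q.
Proof. by rewrite /qc => h; rewrite -scalerAr h -scalerAl !scalerA mulrC. Qed.
Lemma qc_Zr a b q k : qc a b q -> qc a (k *: b) q.
Proof. by rewrite /qc => h; rewrite -scalerAl h -scalerAr !scalerA mulrC. Qed.
Lemma qc_sym a b q : q != 0 -> qc a b q -> qc b a q^-1.
Proof. by rewrite /qc => hq h; rewrite h scalerA mulVf // scale1r. Qed.
Lemma qc_comm a b : qc a b 1 -> commA b a.
Proof. by rewrite /qc /commA scale1r. Qed.
Lemma comm_qc a b : commA b a -> qc a b 1.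
Proof. by rewrite /qc /commA scale1r. Qed.
Lemma qc_eq a b q r : q = r -> qc a b q -> qc a b r.
Proof. by move=> ->. Qed.
End QC.

Section Step.
Variables (F : closedFieldType) (A : algType F) (l : nat) (xi : F).
Hypotheses (hl0 : (0 < l)%N) (hlF : (l%:R : F) != 0) (hxi : l.-primitive_root xi).

Definition clg_seq (z : nat -> A) (n : nat) :=
  (forall k, (k < n)%N -> z k ^+ l = 1) /\
  (forall p q, (p < q)%N -> (q < n)%N -> z q * z p = xi *: (z p * z q)).

Definition units_prop (m : nat) (z : nat -> A) :=
  exists (T : finType) (E : T -> T -> A), #|T| = (l ^ m)%N /\ mxunits E /\
   (forall k, (k < 2 * m)%N -> inspan E (z k)) /\
   (forall c, (forall k, (k < 2 * m)%N -> commA c (z k)) -> forall a b, commA c (E a b)).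

Lemma xi_neq0 : xi != 0.
Proof.
apply/eqP => h; have := xil hxi; rewrite h expr0n; case: l hl0 => //= n _.
by move/eqP; rewrite eq_sym oner_eq0.
Qed.

Lemma root_exists (g : F) : exists c : F, c ^+ l = g.
Proof.
have [c hc] := @solve_monicpoly F l (fun i => if i == 0%N then g else 0) hl0.
exists c; rewrite hc (bigD1 (Ordinal hl0)) //= big1 ?addr0 ?expr0 ?mulr1 //.
move=> i hi; have -> : (nat_of_ord i == 0%N) = false.
  by apply/negP => /eqP h; move: hi; rewrite -val_eqE /= h eqxx.
by rewrite mul0r.
Qed.

Section Prod.
Variables (T U : finType) (E : T -> T -> A) (E' : U -> U -> A).
Hypotheses (hE : mxunits E) (hE' : mxunits E') (hc : forall a b a' b', commA (E a b) (E' a' b')).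

Definition Gp (p q : T * U) : A := E p.1 q.1 * E' p.2 q.2.

Lemma Gp_units : mxunits Gp.
Proof.
split.
  move=> [a1 a2] [b1 b2] [c1 c2] [d1 d2]; rewrite /Gp /=.
  have -> : E a1 b1 * E' a2 b2 * (E c1 d1 * E' c2 d2) =
     (E a1 b1 * E c1 d1) * (E' a2 b2 * E' c2 d2).
    by rewrite -!mulrA; congr (_ * _); rewrite !mulrA (hc c1 d1 a2 b2).
  rewrite hE.1 hE'.1 xpair_eqE.
  by case: (b1 == c1); case: (b2 == c2); rewrite ?mul0r ?mulr0.
rewrite -(pair_big xpredT xpredT (fun a b => E a a * E' b b)) /=.
rewrite -hE.2; apply: eq_bigr => a _.
by rewrite -mulr_sumr hE'.2 mulr1.
Qed.

Lemma Gp_spanl y : inspan E y -> inspan Gp y.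
Proof.
move=> [M ->]; apply: span_sum => a; apply: span_sum => b; apply: spanZ.
rewrite -[E a b]mulr1 -hE'.2 mulr_sumr; apply: span_sum => t.
exact: (span_unit Gp (a, t) (b, t)).
Qed.

Lemma Gp_spanr y : inspan E' y -> inspan Gp y.
Proof.
move=> [M ->]; apply: span_sum => a; apply: span_sum => b; apply: spanZ.
rewrite -[E' a b]mul1r -hE.2 mulr_suml; apply: span_sum => t.
exact: (span_unit Gp (t, a) (t, b)).
Qed.

End Prod.

Lemma units_exist m : forall z, clg_seq z (2 * m) -> units_prop m z.
Proof.
elim: m => [|m IH] z hz.
  exists unit, (fun _ _ => 1); split; first by rewrite card_unit.
  split; first split.
  - by move=> [] [] [] []; rewrite mulr1.
  - by rewrite sumr_const card_unit.
  split; first by move=> k; rewrite muln0.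
  by move=> c _ _ _; apply: commA_1.
have [hzl hzq] := hz.
set u := z 0%N; set v := z 1%N.
have hu : u ^+ l = 1 by apply: hzl; lia.
have hv : v ^+ l = 1 by apply: hzl; lia.
have hvu : v * u = xi *: (u * v) by apply: hzq; lia.
set w := u * v ^+ (l - 1).
have hbw : v ^+ (l - 1) * u = (xi ^+ (l - 1)) *: (u * v ^+ (l - 1)).
  by rewrite -[u in LHS]expr1 (commXX (l - 1) 1 hvu) muln1 expr1.
have [e he] := powprod l hbw.
set g := (xi ^+ (l - 1)) ^+ e.
have hwl : w ^+ l = g%:A.
  by rewrite /w he hu -[v ^+ (l - 1) ^+ l]exprM mulnC exprM hv expr1n mulr1.
have hg : g != 0 by rewrite /g !expf_neq0 // xi_neq0.
have [c hcl] := root_exists g^-1.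
have hc0 : c != 0.
  by apply/eqP => h; move: hcl; rewrite h expr0n; case: l hl0 => // n _ /= /esym /eqP; rewrite invr_eq0 (negPf hg).
have hxl : xi ^+ (l - 1) * xi = 1 by rewrite -exprSr subn1 prednK // (xil hxi).
have hxl' : xi * xi ^+ (l - 1) = 1 by rewrite mulrC.
have hzk : forall k, (1 < k < 2 * m.+1)%N -> qc u (z k) xi /\ qc v (z k) xi.
  by move=> k hk; split; apply: hzq; lia.
have zkw : forall k, (1 < k < 2 * m.+1)%N -> qc w (z k) 1.
  move=> k /hzk [h0 h1]; apply: (qc_eq hxl'); apply: qc_mull => //.
  exact: qc_Xl.
have wzu : forall k, (1 < k < 2 * m.+1)%N -> qc u (w * z k) 1.
  move=> k /hzk [h0 h1]; apply: (qc_eq (_ : 1 * xi ^+ (l - 1) * xi = 1)).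
    by rewrite mul1r.
  by apply: qc_mulr => //; apply: qc_mulr; [apply: qc_refl | apply: qc_Xr].
have wzv : forall k, (1 < k < 2 * m.+1)%N -> qc v (w * z k) 1.
  move=> k /hzk [h0 h1]; apply: (qc_eq (_ : xi^-1 * 1 ^+ (l - 1) * xi = 1)).
    by rewrite expr1n mulr1 mulVf // xi_neq0.
  apply: qc_mulr => //; apply: qc_mulr; first by apply: qc_sym; rewrite ?xi_neq0.
  by apply: qc_Xr; apply: qc_refl.
pose z' k := c *: (w * z k.+2).
have hz' : clg_seq z' (2 * m).
  split.
    move=> k hk; rewrite /z' exprZn exprMn_comm; last first.
      by rewrite /GRing.comm; symmetry; apply: qc_comm; apply: zkw; lia.
    by rewrite hwl hzl ?mulr1; [rewrite scalerA hcl mulVf // scale1r | lia].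
  move=> p q hpq hq; rewrite /z'; apply: qc_Zl; apply: qc_Zr.
  apply: (qc_eq (_ : (1 * 1) * (1 * xi) = xi)); first by rewrite !mul1r.
  apply: qc_mulr; apply: qc_mull.
  - exact: qc_refl.
  - by apply: comm_qc; apply: commA_sym; apply: qc_comm; apply: zkw; lia.
  - by apply: zkw; lia.
  - by apply: hzq; lia.
have [T' [E' [hT' [hE' [hsp' hcm']]]]] := IH z' hz'.
pose E := Eb (l := l) u v.
have hE : mxunits E := Eb_units hl0 hlF hxi hu hv hvu.
have hcomm : forall a b a' b', commA (E a b) (E' a' b').
  move=> a b a' b'; apply: hcm' => k hk; apply: commA_sym; apply: Eb_comm.
    by apply: commA_sym; apply: commA_scale; apply: commA_sym; apply: qc_comm; apply: wzu; lia.
  by apply: commA_sym; apply: commA_scale; apply: commA_sym; apply: qc_comm; apply: wzv; lia.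
exists ('I_l * T')%type, (Gp E E'); split.
  by rewrite card_prod card_ord hT' expnS.
split; first exact: Gp_units.
split.
  move=> k hk; case: k hk => [|[|k]] hk.
  - by apply: Gp_spanl => //; exact: (u_span hl0 hlF hxi hu hvu).
  - by apply: Gp_spanl => //; exact: (v_span hl0 hlF hxi hu hv hvu).
  have -> : z k.+2 = c^-1 *: (v * u ^+ (l - 1) * z' k).
    rewrite /z' -scalerAr scalerA mulVf // scale1r /w !mulrA -(mulrA v) -exprSr subn1 prednK //.
    by rewrite hu mulr1 -exprS prednK // hv mul1r.
  apply: spanZ; apply: spanM; first exact: Gp_units.
    apply: spanM; first exact: Gp_units.
      by apply: Gp_spanl => //; exact: (v_span hl0 hlF hxi hu hv hvu).
    apply: Gp_spanl => //.
    elim: (l - 1)%N => [|n IHn]; first by rewrite expr0; apply: span1.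
    by rewrite exprS; apply: spanM => //; exact: (u_span hl0 hlF hxi hu hvu).
  by apply: Gp_spanr => //; apply: hsp'; lia.
move=> c' hc' [a a'] [b b']; rewrite /Gp /=; apply: commA_mul.
  by apply: Eb_comm; apply: hc'; lia.
apply: hcm' => k hk; rewrite /z'; apply: commA_scale; apply: commA_mul; last by apply: hc'; lia.
by apply: commA_mul; [apply: hc'; lia | apply: commA_X; apply: hc'; lia].
Qed.

End Step.


Section Rank.
Variables (F : fieldType) (N : nat).
Implicit Types P R : 'M[F]_N.

Lemma rank_orth_add P R : P *m P = P -> R *m R = R -> P *m R = 0 -> R *m P = 0 ->
  \rank (P + R)%R = (\rank P + \rank R)%N.
Proof.
move=> hP hR hPR hRP; apply/eqP; rewrite eqn_leq (mxrank_add P R) /=.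
have e1 : block_mx P 0 0 R = col_mx P R *m row_mx P R.
  by rewrite mul_col_row hP hR hPR hRP.
have e2 : col_mx P R = col_mx P R *m (P + R).
  by rewrite mul_col_mx !mulmxDr hP hR hPR hRP addr0 add0r.
rewrite -rank_diag_block_mx e1; apply: leq_trans (mxrankM_maxl _ _) _.
by rewrite e2; apply: mxrankM_maxr.
Qed.

End Rank.

Lemma units_dvd (F : fieldType) (n N : nat) (Q : 'I_n.+1 -> 'I_n.+1 -> 'M[F]_N.+1) :
  mxunits Q -> (n.+1 %| N.+1)%N.
Proof.
move=> [hQ hS].
have hQm : forall a b c d, Q a b *m Q c d = if b == c then Q a d else 0.
  by move=> a b c d; rewrite mulmxE hQ.
set r := \rank (Q ord0 ord0).
have hr : forall a, \rank (Q a a) = r.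
  have le : forall a b, (\rank (Q b b) <= \rank (Q a a))%N.
    move=> a b; have -> : Q b b = Q b a *m Q a a *m Q a b by rewrite hQm eqxx hQm eqxx.
    by apply: leq_trans (mxrankM_maxl _ _) _; apply: mxrankM_maxr.
  by move=> a; apply/eqP; rewrite eqn_leq !le.
pose S k := \sum_(a < n.+1 | (a < k)%N) Q a a.
have SQ : forall k c, S k *m Q c c = if (c < k)%N then Q c c else 0.
  move=> k c; rewrite /S mulmx_suml; case: ifP => hc.
    rewrite (bigD1 c) //= hQm eqxx big1 ?addr0 //.
    move=> a /andP [_ hac]; by rewrite hQm (negPf hac).
  by rewrite big1 // => a ha; rewrite hQm; case: eqP => // e; move: hc; rewrite -e ha.
have QS : forall k (c : 'I_n.+1), (k <= c)%N -> Q c c *m S k = 0.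
  move=> k c hc; rewrite /S mulmx_sumr big1 // => a ha.
  by rewrite hQm; case: eqP => // e; move: ha; rewrite -e; lia.
have SS : forall k, S k *m S k = S k.
  move=> k; rewrite {2}/S mulmx_sumr; apply: eq_bigr => a ha; by rewrite SQ ha.
have Srec : forall k (hk : (k < n.+1)%N), S k.+1 = S k + Q (Ordinal hk) (Ordinal hk).
  move=> k hk; rewrite /S (bigD1 (Ordinal hk)) //= addrC; congr (_ + _).
  by apply: eq_bigl => a; rewrite ltnS -val_eqE /= ltn_neqAle andbC.
have rS : forall k, (k <= n.+1)%N -> \rank (S k) = (k * r)%N.
  elim=> [|k IH] hk.
    by rewrite /S big_pred0 ?mxrank0 // => a.
  rewrite (Srec k hk) rank_orth_add ?IH ?hr ?SS ?hQm ?eqxx ?SQ ?ltnn ?QS //; try lia.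
have := rS n.+1 (leqnn _).
have -> : S n.+1 = 1 by rewrite -hS; apply: eq_bigl => a; rewrite ltn_ord.
rewrite mxrank1 => ->; exact: dvdn_mulr.
Qed.


Section Gen.
Variables (F : fieldType) (A : algType F) (I : eqType) (x : I -> A).

Inductive gen (X : A -> Prop) : A -> Prop :=
| gen_base a : X a -> gen X a
| gen_one : gen X 1
| gen_add a b : gen X a -> gen X b -> gen X (a + b)
| gen_scale k a : gen X a -> gen X (k *: a)
| gen_mul a b : gen X a -> gen X b -> gen X (a * b).

Definition fin_gen (a : A) := exists s : seq I, gen (fun b => exists2 i, i \in s & b = x i) a.

Lemma gen_mono (X Y : A -> Prop) a : (forall b, X b -> Y b) -> gen X a -> gen Y a.
Proof.
move=> hXY; elim => {a} [a /hXY|||k a _|a b _ ha _ hb].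
- exact: gen_base.
- exact: gen_one.
- by move=> a b _ ha _ hb; apply: gen_add.
- exact: gen_scale.
- exact: gen_mul.
Qed.

Lemma fin_gen2 a b : fin_gen a -> fin_gen b ->
  exists s : seq I, gen (fun c => exists2 i, i \in s & c = x i) a /\ gen (fun c => exists2 i, i \in s & c = x i) b.
Proof.
move=> [s1 h1] [s2 h2]; exists (s1 ++ s2); split.
  by apply: gen_mono h1 => c [i hi ->]; exists i; rewrite // mem_cat hi.
by apply: gen_mono h2 => c [i hi ->]; exists i; rewrite // mem_cat hi orbT.
Qed.

Definition Spred : {pred A} :=
  fun a => if excluded_middle_informative (fin_gen a) then true else false.

Lemma SpredP a : reflect (fin_gen a) (a \in Spred).
Proof.
rewrite unfold_in /Spred; case: excluded_middle_informative => h.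
  by apply: ReflectT. by apply: ReflectF.
Qed.

Lemma Spred_closed : subalg_closed Spred.
Proof.
split.
- by apply/SpredP; exists [::]; apply: gen_one.
- move=> k u v /SpredP hu /SpredP hv; apply/SpredP.
  have [s [h1 h2]] := fin_gen2 hu hv; exists s.
  by apply: gen_add => //; apply: gen_scale.
- move=> u v /SpredP hu /SpredP hv; apply/SpredP.
  have [s [h1 h2]] := fin_gen2 hu hv; exists s.
  by apply: gen_mul.
Qed.

HB.instance Definition _ := GRing.isSubalgClosed.Build F A Spred Spred_closed.

Inductive SB := mkSB a & a \in Spred.
Definition vSB u := let: mkSB a _ := u in a.
HB.instance Definition _ := [isSub for vSB].
HB.instance Definition _ := [Choice of SB by <:].
HB.instance Definition _ := [SubChoice_isSubAlgebra of SB by <:].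

Lemma x_in i : x i \in Spred.
Proof. by apply/SpredP; exists [:: i]; apply: gen_base; exists i; rewrite ?mem_head. Qed.

Lemma vSB_hom : is_alg_hom (val : SB -> A).
Proof.
split.
- by move=> a b; rewrite raddfD.
- by move=> c a; rewrite linearZ.
- by move=> a b; rewrite rmorphM.
- by rewrite rmorph1.
Qed.

End Gen.

Lemma all_fin_gen (F : fieldType) (l : nat) (xi : F) (d : Order.disp_t)
  (I : orderType d) (A : algType F) (x : I -> A) :
  is_Clg l xi x -> forall a, fin_gen x a.
Proof.
move=> [hrel hU] a.
pose y i : SB x := mkSB (x_in x i).
have hy : clg_rel l xi y.
  have [h1 h2 h3] := hrel.
  split.
  - by move=> i; apply: val_inj; rewrite rmorphXn rmorph1 /= h1.
  - by move=> i j hij; apply: val_inj; rewrite linearZ !rmorphM rmorphXn /= h2.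
  - by move=> i j hij; apply: val_inj; rewrite linearZ !rmorphM rmorphXn /= h3.
have [[g [hg hgx]] _] := hU _ y hy.
have hid : is_alg_hom (fun a : A => a) by [].
have hvg : is_alg_hom (fun a => val (g a)).
  have [g1 g2 g3 g4] := hg; have [v1 v2 v3 v4] := vSB_hom x.
  by split; [move=> *; rewrite g1 v1 | move=> *; rewrite g2 v2 | move=> *; rewrite g3 v3 | rewrite g4 v4].
have [_ hU'] := hU _ x hrel.
have e := hU' _ _ hvg hid (fun i => congr1 val (hgx i)) (fun i => erefl) a.
apply/SpredP; rewrite -e; case: (g a) => b hb //.
Qed.

Lemma gen_img (F : fieldType) (A B : algType F) (f : B -> A) (X : A -> Prop) a :
  is_alg_hom f -> (forall b, X b -> exists m, f m = b) -> gen X a -> exists m, f m = a.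
Proof.
move=> [f1 f2 f3 f4] hX; elim => {a}.
- by move=> a /hX.
- by exists 1.
- by move=> a b _ [m1 <-] _ [m2 <-]; exists (m1 + m2).
- by move=> k a _ [m <-]; exists (k *: m).
- by move=> a b _ [m1 <-] _ [m2 <-]; exists (m1 * m2).
Qed.


Lemma extend_seq (I : eqType) (s0 : seq I) n : infinite_type I -> (size s0 <= n)%N ->
  exists J : seq I, uniq J /\ size J = n /\ {subset s0 <= J}.
Proof.
move=> hinf hn.
have gen : forall k, exists J : seq I, uniq J /\ size J = (size (undup s0) + k)%N /\ {subset s0 <= J}.
  elim=> [|k [J [hu [hs hsub]]]].
    by exists (undup s0); rewrite undup_uniq addn0; split=> //; split=> // ?; rewrite mem_undup.
  have [t ht] := hinf J; exists (t :: J); split; first by rewrite /= ht hu.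
  by split; [rewrite /= hs addnS | move=> i /hsub hi; rewrite inE hi orbT].
have [J [hu [hs hsub]]] := gen (n - size (undup s0))%N.
exists J; split=> //; split=> //; rewrite hs subnKC //.
by apply: leq_trans (size_undup _) hn.
Qed.

Lemma hom_sum (F : fieldType) (A B : algType F) (f : A -> B) (T : finType) (P : pred T) (G : T -> A) :
  is_alg_hom f -> f (\sum_(t | P t) G t) = \sum_(t | P t) f (G t).
Proof.
move=> [f1 f2 f3 f4].
have f0 : f 0 = 0 by apply: (addrI (f 0)); rewrite -f1 !addr0.
by apply: (big_morph f f1 f0).
Qed.

Section Main.
Variables (F : closedFieldType) (l : nat) (xi : F) (d : Order.disp_t) (I : orderType d)
  (A : algType F) (x : I -> A).
Hypotheses (hl : (1 < l)%N) (hch : forall p : nat, p \in [pchar F] -> coprime p l)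
  (hxi : l.-primitive_root xi) (hinf : infinite_type I) (hC : is_Clg l xi x).

Lemma hl0 : (0 < l)%N. Proof. exact: ltnW. Qed.

Lemma hlF : (l%:R : F) != 0.
Proof.
rewrite natf_neq0_pchar; apply/pnatP; first exact: hl0.
move=> p hp hpl; rewrite !inE; apply/negP => /hch.
by rewrite prime_coprime // hpl.
Qed.

Lemma rel_swap i j : (i < j)%O -> x j * x i = xi *: (x i * x j).
Proof.
move=> hij; have [h1 h2 _] := hC.1.
have := h2 i j hij => e.
rewrite -[x j * x i]mul1r -(h1 i) -[l]prednK ?hl0 // exprS -!mulrA.
by rewrite (mulrA _ (x j)) e -scalerAr.
Qed.

Lemma big_embed (J : seq I) m : uniq J -> size J = (2 * m)%N ->
  exists k, (l ^ m)%N = k.+1 /\ exists f : 'M[F]_k.+1 -> A, matrix_embedding f /\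
    forall i, i \in J -> exists M, f M = x i.
Proof.
move=> hu hs.
have [i0 _] := hinf [::].
set J' := sort <=%O J.
have hsort : sorted <%O J' by rewrite sort_lt_sorted.
have hsz : size J' = (2 * m)%N by rewrite size_sort.
pose z k := x (nth i0 J' k).
have hz : clg_seq l xi z (2 * m).
  split.
    by move=> k _; rewrite /z; case: hC => [[h1 _ _] _].
  move=> p q hpq hq; rewrite /z; apply: rel_swap.
  by apply: (sorted_ltn_nth lt_trans) => //; rewrite inE hsz //; lia.
have [T [E [hT [hE [hsp _]]]]] := units_exist hl0 hlF hxi hz.
have [k [hk [f [hf himg]]]] := units_embed hE.
exists k; split; first by rewrite -hT hk.
exists f; split=> // i hi.
have hi' : i \in J' by rewrite mem_sort.
apply: himg; rewrite -(nth_index i0 hi'); apply: (hsp (index i J')).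
by rewrite -hsz index_mem.
Qed.

Lemma finset_gen (s : seq A) : exists s0 : seq I,
  forall a, a \in s -> gen (fun b => exists2 i, i \in s0 & b = x i) a.
Proof.
elim: s => [|a s [s0 hs0]]; first by exists [::].
have [s1 h1] := all_fin_gen hC a.
exists (s1 ++ s0) => b; rewrite inE => /orP [/eqP ->|hb].
  by apply: gen_mono h1 => c [i hi ->]; exists i; rewrite // mem_cat hi.
by apply: gen_mono (hs0 b hb) => c [i hi ->]; exists i; rewrite // mem_cat hi orbT.
Qed.

Lemma in_matrix_sub (s : seq A) : exists m k, (l ^ m)%N = k.+1 /\
  exists f : 'M[F]_k.+1 -> A, matrix_embedding f /\ forall a, a \in s -> exists M, f M = a.
Proof.
have [s0 hs0] := finset_gen s.
have [J [hu [hs hsub]]] := @extend_seq I s0 (2 * size s0) hinf (leq_pmull _ (isT : (0 < 2)%N)).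
have [k [hk [f [hf himg]]]] := big_embed hu hs.
exists (size s0), k; split=> //; exists f; split=> // a ha.
apply: (gen_img hf.1 _ (hs0 a ha)) => b [i hi ->].
by apply: himg; apply: hsub.
Qed.

Lemma loc : locally_matrix A.
Proof.
move=> s; have [m [k [_ [f [hf himg]]]]] := in_matrix_sub s.
by exists k, f.
Qed.

Lemma sum_delta n : \sum_(a < n.+1) delta_mx a a = (1 : 'M[F]_n.+1).
Proof.
apply/matrixP => i j; rewrite summxE !mxE (bigD1 i) //= big1 ?addr0.
  by rewrite mxE eqxx /= eq_sym.
by move=> a hai; rewrite mxE eq_sym (negPf hai).
Qed.

Lemma D_dvd n : D_set A n -> exists m, (n %| l ^ m)%N.
Proof.
move=> [k' [-> [f' [hf' hinj']]]].
pose s := [seq f' (delta_mx p.1 p.2) | p <- enum {: 'I_k'.+1 * 'I_k'.+1}].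
have [m [k [hk [f [[hf hinj] himg]]]]] := in_matrix_sub s.
have [f1 f2 f3 f4] := hf.
have hex : forall a b : 'I_k'.+1, exists M, f M = f' (delta_mx a b).
  move=> a b; apply: himg; apply/mapP; exists (a, b) => //; by rewrite mem_enum.
pose Q a b := proj1_sig (constructive_indefinite_description _ (hex a b)).
have hQ : forall a b, f (Q a b) = f' (delta_mx a b) by move=> a b; rewrite /Q; case: constructive_indefinite_description.
have [g1 g2 g3 g4] := hf'.
have hU : mxunits Q.
  split.
    move=> a b c e; apply: hinj; rewrite f3 !hQ -g3 -mulmxE mul_delta_mx_cond.
    case: eqP => _; first by rewrite mulr1n hQ.
    have f0 : f 0 = 0 by apply: (addrI (f 0)); rewrite -f1 !addr0.
    have g0 : f' 0 = 0 by apply: (addrI (f' 0)); rewrite -g1 !addr0.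
    by rewrite mulr0n f0 g0.
  apply: hinj; rewrite (hom_sum _ _ hf) f4.
  under eq_bigr => a _ do rewrite hQ.
  by rewrite -(hom_sum _ _ hf') sum_delta g4.
exists m; rewrite hk; exact: units_dvd hU.
Qed.

Lemma D_pow m : D_set A (l ^ m.+1).
Proof.
have [J [hu [hs _]]] := @extend_seq I [::] (2 * m.+1) hinf (leq0n _).
have [k [hk [f [hf _]]]] := big_embed hu hs.
by exists k; split=> //; exists f.
Qed.

Lemma lcm_part : is_steinitz_lcm (D_set A) (steinitz_inf l).
Proof.
split.
  move=> n hn p hp; rewrite /steinitz_of_nat /steinitz_inf.
  case: ifP => //= hpl.
  have [m hm] := D_dvd hn.
  case: (posnP (logn p n)) => [-> //|].
  rewrite logn_gt0 mem_primes => /and3P [_ hn0 hpn].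
  have : (p %| l ^ m)%N by apply: dvdn_trans hm.
  by rewrite Euclid_dvdX // hpl.
move=> t ht p hp; rewrite /steinitz_inf; case: ifP => hpl; last by case: (t p).
case e : (t p) => [r|] //=.
have := ht _ (D_pow r) p hp; rewrite /steinitz_of_nat e /= lognX.
have : (0 < logn p l)%N by rewrite logn_gt0 mem_primes hp hl0 hpl.
move=> h1 h2; have := leq_trans (leq_pmulr r.+1 h1) h2.
by rewrite ltnn.
Qed.

End Main.


Theorem theorem7 (F : closedFieldType) (l : nat) (xi : F)
  (d : Order.disp_t) (I : orderType d) (A : algType F) (x : I -> A) :
  (1 < l)%N ->
  (forall p : nat, p \in [pchar F] -> coprime p l) ->
  l.-primitive_root xi ->
  infinite_type I ->
  is_Clg l xi x ->
  locally_matrix A /\ is_steinitz_lcm (D_set A) (steinitz_inf l).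
Proof.
move=> hl hch hxi hinf hC.
split; [exact: (loc hl hch hxi hinf hC) | exact: (lcm_part hl hch hxi hinf hC)].
Qed.
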